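(* For any $n\ge 1$, every longest saturated chain from $0^n$ to $12^{n-1}$ in $(\mathsf{Tr}(n),\preccurlyeq)$ has length $2n-1$. Moreover, a triword $u\in\mathsf{Tr}(n)$ belongs to such a longest saturated chain if and only if, whenever $u_i=0$, one has $u_j=0$ for all $j\ge i$.
   Context: A triword of size $n$ is a word $u=u_1\cdots u_n$ with $u_i\in\{0,1,2\}$, $u_1\ne 2$, and such that $u_i=0$ implies $u_j\neq 1$ for all $j>i$; $\mathsf{Tr}(n)$ is their set, ordered componentwise ($u\preccurlyeq v$ iff $u_i\le v_i$ for all $i$); its minimum is $0^n$ and its maximum is $12^{n-1}$. A saturated chain $x_1\lessdot\cdots\lessdot x_r$ (successive covering relations) has length $r-1$. *)

(* Defs.v *)
From mathcomp Require Import all_boot.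
Set Implicit Arguments. Unset Strict Implicit. Unset Printing Implicit Defensive.

(* Words of length n over {0,1,2}, positions indexed 0..n-1 (position 0 = u_1). *)
Definition word (n : nat) := {ffun 'I_n -> 'I_3}.

Definition triword n (u : word n) : bool :=
  [forall i : 'I_n, (val i == 0) ==> (val (u i) != 2)] &&
  [forall i : 'I_n, forall j : 'I_n,
     ((val i < val j) && (val (u i) == 0)) ==> (val (u j) != 1)].

Definition wle n (u v : word n) : bool := [forall i, val (u i) <= val (v i)].
Definition wlt n (u v : word n) : bool := wle u v && (u != v).

Definition tr_cover n (u v : word n) : bool :=
  [&& triword u, triword v, wlt u v &
      ~~ [exists w : word n, [&& triword w, wlt u w & wlt w v]]].

Definition tr_bot n : word n := [ffun _ => ord0].
Definition tr_top n : word n :=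
  [ffun i : 'I_n => if val i == 0 then inord 1 else inord 2].

(* A saturated chain x_1 <. x_2 <. ... <. x_r from 0^n to 1 2^(n-1) is
   represented by the sequence s = [x_2; ...; x_r] with x_1 = 0^n;
   its length r-1 is size s; its elements are those of tr_bot n :: s. *)
Definition sat_chain n (s : seq (word n)) : Prop :=
  path (@tr_cover n) (tr_bot n) s /\ last (tr_bot n) s = tr_top n.

Definition longest_sat_chain n (s : seq (word n)) : Prop :=
  sat_chain s /\ forall t : seq (word n), sat_chain t -> size t <= size s.

(* Main.v *)
Require Import Defs.
From mathcomp Require Import all_boot.
From mathcomp Require Import zify.
Set Implicit Arguments. Unset Strict Implicit.

Section S.
Variable n : nat.
Implicit Types u v w x y : word n.

Definition wsum u := \sum_(i < n) val (u i).

Lemma triwordP u : triword u <->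
  (forall i : 'I_n, val i = 0 -> val (u i) <> 2) /\
  (forall i j : 'I_n, val i < val j -> val (u i) = 0 -> val (u j) <> 1).
Proof.
split.
- move=> /andP[/forallP H1 /forallP H2]; split.
  + move=> i Hi; move: (H1 i); rewrite Hi /= => /eqP; done.
  + move=> i j Hij Hi; move: (H2 i) => /forallP /(_ j); rewrite Hij Hi eqxx /= => /eqP; done.
- move=> [H1 H2]; apply/andP; split; apply/forallP => i.
  + apply/implyP => /eqP Hi; apply/eqP; exact: H1.
  + apply/forallP => j; apply/implyP => /andP[Hij /eqP Hi]; apply/eqP; exact: (H2 i j Hij Hi).
Qed.

Lemma wleP u v : wle u v <-> forall i, val (u i) <= val (v i).
Proof. by split => [/forallP|H]; last apply/forallP. Qed.

Lemma wle_sum u v : wle u v -> wsum u <= wsum v.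
Proof. by move/wleP => H; apply: leq_sum => i _. Qed.

Lemma neq_ex u v : u != v -> exists i, val (u i) != val (v i).
Proof.
move=> Huv; apply/existsP; apply: contraNT Huv; rewrite negb_exists => /forallP H.
apply/eqP/ffunP => i; apply: val_inj; apply/eqP; move: (H i); by rewrite negbK.
Qed.

Lemma wlt_sum u v : wlt u v -> wsum u < wsum v.
Proof.
move=> /andP[/wleP Hle /neq_ex [i Hi]].
rewrite /wsum (bigD1 i) //= [X in _ < X](bigD1 i) //= -addSn.
apply: leq_add; last by apply: leq_sum => j _; exact: Hle.
by rewrite ltn_neqAle Hi Hle.
Qed.

Lemma wle_step u v : wle u v -> wsum v = (wsum u).+1 ->
  forall i, val (v i) <= (val (u i)).+1.
Proof.
move=> /wleP Hle Hs i; rewrite leqNgt; apply/negP => Hi.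
have : (wsum u).+2 <= wsum v.
  rewrite /wsum (bigD1 i) //= [X in _ <= X](bigD1 i) //= -!addSn.
  by apply: leq_add; last by apply: leq_sum => j _; exact: Hle.
by rewrite Hs ltnn.
Qed.

Lemma wle_eq u v : wle u v -> wsum v <= wsum u -> u = v.
Proof.
move=> Hle Hs; apply/eqP; apply: contraTT Hs => Hne.
by rewrite -ltnNge; apply: wlt_sum; rewrite /wlt Hle Hne.
Qed.

Lemma wle_trans u v w : wle u v -> wle v w -> wle u w.
Proof. move=> /wleP H1 /wleP H2; apply/wleP => i; exact: leq_trans (H1 i) (H2 i). Qed.

Lemma wle_refl u : wle u u.
Proof. by apply/wleP. Qed.

Lemma cover_wlt u v : tr_cover u v -> wlt u v.
Proof. by case/and4P. Qed.

Lemma cover_tw u v : tr_cover u v -> triword u /\ triword v.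
Proof. by case/and4P. Qed.

Lemma path_sum x s : path (@tr_cover n) x s -> wsum x + size s <= wsum (last x s).
Proof.
elim: s x => [|y s IH] x /=; first by rewrite addn0.
move=> /andP[/cover_wlt/wlt_sum H1 /IH H2]; lia.
Qed.

Lemma path_le x s y : path (@tr_cover n) x s -> y \in x :: s -> wle x y.
Proof.
elim: s x => [|z s IH] x /=.
  by rewrite inE => _ /eqP ->; apply: wle_refl.
move=> /andP[Hc Hp]; rewrite inE => /orP[/eqP ->|Hy]; first exact: wle_refl.
apply: wle_trans (IH _ Hp Hy); by case/andP: (cover_wlt Hc).
Qed.

Lemma cover_of u v : triword u -> triword v -> wle u v -> wsum v = (wsum u).+1 ->
  tr_cover u v.
Proof.
move=> Hu Hv Hle Hs; rewrite /tr_cover Hu Hv /=.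
have Hne : u != v by apply/eqP => E; move: Hs; rewrite E; lia.
rewrite /wlt Hle Hne /=; apply/existsP => [[w /and3P[_ /wlt_sum H1 /wlt_sum H2]]].
lia.
Qed.


Definition good u := triword u /\
  forall i j : 'I_n, val (u i) = 0 -> val i <= val j -> val (u j) = 0.

Definition upd u (k : 'I_n) (c : 'I_3) : word n :=
  [ffun i => if i == k then c else u i].

Lemma wsum_upd u k c : val c = (val (u k)).+1 -> wsum (upd u k c) = (wsum u).+1.
Proof.
move=> Hc; rewrite /wsum (bigD1 k) //= [X in _ = X.+1](bigD1 k) //= ffunE eqxx Hc.
rewrite addSn; congr (_ + _).+1; apply: eq_bigr => i /negbTE Hi; by rewrite ffunE Hi.
Qed.

Lemma step u v : good u -> good v -> wle u v -> u != v ->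
  exists w, [/\ good w, wle u w, wle w v & wsum w = (wsum u).+1].
Proof.
move=> [/triwordP [Hu1 Hu2] Hu3] [/triwordP [Hv1 Hv2] Hv3] /wleP Hle Hne.
have H2 : val (inord 2 : 'I_3) = 2 by rewrite /= inordK.
have H1 : val (inord 1 : 'I_3) = 1 by rewrite /= inordK.
have Hlt3 : forall c : 'I_3, val c < 3 by move=> c; exact: ltn_ord.
case: (boolP [exists i, (val (u i) == 1) && (val (v i) == 2)]).
- move=> /existsP [i /andP[/eqP Hui /eqP Hvi]].
  have Hi0 : val i <> 0 by move=> E; exact: (Hv1 i E).
  exists (upd u i (inord 2)); split.
  + split.
    * apply/triwordP; split.
      - move=> i' Hi'; rewrite ffunE; case: eqP => [E|_]; first by move: Hi'; rewrite E.
        exact: Hu1.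
      - move=> i' j Hij; rewrite !ffunE; case: eqP => [_|Ei']; first by rewrite H2.
        move=> Hi'; case: eqP => [_|_]; first by rewrite H2.
        exact: Hu2 Hij Hi'.
    * move=> i' j; rewrite !ffunE; case: eqP => [_|Ei']; first by rewrite H2.
      move=> Hi' Hij; case: eqP => [Ej|_]; last exact: Hu3 Hi' Hij.
      by have := Hu3 _ _ Hi' Hij; rewrite Ej Hui.
  + apply/wleP => j; rewrite ffunE; case: eqP => [->|_] //; by rewrite H2 Hui.
  + apply/wleP => j; rewrite ffunE; case: eqP => [->|_] //; by rewrite H2 Hvi.
  + by apply: wsum_upd; rewrite H2 Hui.
- rewrite negb_exists => /forallP HA.
  have [i Hi] := neq_ex Hne.
  have Hui : val (u i) = 0.
    have := HA i; have := Hle i; have := Hlt3 (u i); have := Hlt3 (v i); move: Hi.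
    rewrite /=; lia.
  have exP : exists m, [exists j : 'I_n, (val j == m) && (val (u j) == 0)].
    by exists (val i); apply/existsP; exists i; rewrite eqxx Hui.
  case: (ex_minnP exP) => m /existsP [k /andP [/eqP Ekm /eqP Huk]] Hmin.
  have Hkmin : forall j : 'I_n, val (u j) = 0 -> val k <= val j.
    move=> j Hj; rewrite Ekm; apply: Hmin; apply/existsP; exists j; by rewrite eqxx Hj.
  have Hvk : val (v k) <> 0.
    by move=> E; have := Hv3 _ _ E (Hkmin _ Hui); move: Hi; rewrite Hui => /eqP; auto.
  exists (upd u k (inord 1)); split.
  + split.
    * apply/triwordP; split.
      - move=> i' Hi'; rewrite ffunE; case: eqP => [_|_]; first by rewrite H1.
        exact: Hu1.
      - move=> i' j Hij; rewrite !ffunE; case: eqP => [_|Ei']; first by rewrite H1.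
        move=> Hi'; have Hk := Hkmin _ Hi'.
        case: eqP => [Ej|_]; first by move: Hij; rewrite Ej => Hij; move: (leq_trans Hij Hk); rewrite ltnn.
        by rewrite (Hu3 _ _ Hi' (ltnW Hij)).
    * move=> i' j; rewrite !ffunE; case: eqP => [_|Ei']; first by rewrite H1.
      move=> Hi' Hij; have Hk := Hkmin _ Hi'.
      case: eqP => [Ej|_]; last exact: Hu3 Hi' Hij.
      exfalso; apply: Ei'; apply: val_inj; move: Hij Hk; rewrite Ej => Hij Hk; apply/eqP; by rewrite eqn_leq Hij Hk.
  + apply/wleP => j; rewrite ffunE; case: eqP => [->|_] //; by rewrite H1 Huk.
  + apply/wleP => j; rewrite ffunE; case: eqP => [->|_] //; rewrite H1; lia.
  + by apply: wsum_upd; rewrite H1 Huk.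
Qed.


Lemma chain d u v : good u -> good v -> wle u v -> wsum v = wsum u + d ->
  exists s, [/\ path (@tr_cover n) u s, last u s = v & size s = d].
Proof.
elim: d u => [|d IH] u Hu Hv Hle Hs.
  exists [::]; split => //=; apply: wle_eq Hle _; by rewrite Hs addn0.
have Hne : u != v by apply/eqP => E; move: Hs; rewrite E; lia.
have [w [Hw Huw Hwv Hsw]] := step Hu Hv Hle Hne.
have [s [Hp Hl Hsz]] := IH w Hw Hv Hwv (etrans Hs (etrans (addnS _ _) (esym (congr1 (addn^~ d) Hsw)))).
exists (w :: s); split => //=; last by rewrite Hsz.
rewrite Hp andbT; apply: cover_of => //; [exact: Hu.1 | exact: Hw.1].
Qed.

Lemma good_bot : good (tr_bot n).
Proof.
split; last by move=> i j; rewrite !ffunE.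
apply/triwordP; split=> i *; by rewrite ffunE.
Qed.

Lemma val_top (i : 'I_n) : val (tr_top n i) = if val i == 0 then 1 else 2.
Proof. by rewrite ffunE; case: ifP => _ /=; rewrite inordK. Qed.

Lemma good_top : good (tr_top n).
Proof.
split; last by move=> i j; rewrite val_top; case: ifP.
apply/triwordP; split=> [i|i j _]; rewrite val_top; case: ifP => // /eqP E /E [].
Qed.

Lemma bot_le u : wle (tr_bot n) u.
Proof. by apply/wleP => i; rewrite ffunE. Qed.

Lemma le_top u : triword u -> wle u (tr_top n).
Proof.
move=> /triwordP [H1 _]; apply/wleP => i; rewrite val_top.
have := ltn_ord (u i); case: ifP => [/eqP E|_]; last by [].
have := H1 i E; rewrite /=; lia.
Qed.

Lemma wsum_bot : wsum (tr_bot n) = 0.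
Proof. by apply: big1 => i _; rewrite ffunE. Qed.

Lemma key x s : path (@tr_cover n) x s -> wsum (last x s) = wsum x + size s ->
  forall y, y \in x :: s -> forall i j : 'I_n,
  val (y i) = 0 -> val i < val j -> val (y j) = 2 -> val (x j) = 2.
Proof.
elim: s x => [|x' s IH] x /=.
  by move=> _ _ y; rewrite inE => /eqP -> i j _ _.
move=> /andP [Hc Hp] Hs y; rewrite inE => /orP [/eqP -> //|Hy] i j Hyi Hij Hyj.
have H1 := wlt_sum (cover_wlt Hc).
have H2 := path_sum Hp.
have Hsx : wsum x' = (wsum x).+1 by lia.
have Hx'j := IH x' Hp (ltac:(lia)) y Hy i j Hyi Hij Hyj.
have Hxx' : wle x x' by case/andP: (cover_wlt Hc).
have Hb := wle_step Hxx' Hsx j.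
have /wleP Hxy := path_le (x := x) (s := x' :: s) (y := y) (ltac:(by rewrite /= Hc Hp)) (ltac:(by rewrite in_cons Hy orbT)).
have Hxi : val (x i) = 0 by move: (Hxy i); rewrite /= Hyi leqn0 => /eqP.
have [/triwordP [_ Ht] _] := cover_tw Hc.
have := Ht i j Hij Hxi; have := ltn_ord (x j); move: Hb; rewrite Hx'j /=; lia.
Qed.

End S.

Theorem lemma3p1 (n : nat) (hn : 0 < n) :
  (forall s : seq (word n), longest_sat_chain s -> size s = 2 * n - 1) /\
  (forall u : word n, triword u ->
     ((exists s : seq (word n), longest_sat_chain s /\ u \in tr_bot n :: s) <->
      (forall i j : 'I_n, val (u i) = 0 -> val i <= val j -> val (u j) = 0))).
Proof.
have Htop : wsum (tr_top n) = 2 * n - 1.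
  case: n hn => // n' _; rewrite /wsum big_ord_recl val_top /=.
  rewrite (eq_bigr (fun _ => 2)) => [|i _]; last by rewrite val_top.
  rewrite sum_nat_const card_ord; lia.
have Hex : forall u, good u -> exists s,
    [/\ sat_chain s, size s = wsum (tr_top n) & u \in tr_bot n :: s].
  move=> u Hu.
  have [s1 [Hp1 Hl1 Hs1]] := chain (d := wsum u) (good_bot n) Hu (bot_le u)
    (ltac:(by rewrite wsum_bot)).
  have Hle := wle_sum (le_top Hu.1).
  have [s2 [Hp2 Hl2 Hs2]] := chain (d := wsum (tr_top n) - wsum u) Hu (good_top n)
    (le_top Hu.1) (ltac:(lia)).
  exists (s1 ++ s2); split.
  + by split; rewrite ?cat_path ?last_cat Hl1 // Hp1 Hp2.
  + rewrite size_cat Hs1 Hs2; lia.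
  + by rewrite -cat_cons mem_cat -Hl1 mem_last.
have Hub : forall t : seq (word n), sat_chain t -> size t <= wsum (tr_top n).
  by move=> t [Hp Hl]; have := path_sum Hp; rewrite Hl wsum_bot add0n.
have Hlong : forall s : seq (word n), longest_sat_chain s -> size s = wsum (tr_top n).
  move=> s [Hs Hmax]; have [t [Ht Hsz _]] := Hex _ (good_bot n).
  have := Hmax t Ht; have := Hub s Hs; lia.
split; first by move=> s /Hlong; rewrite Htop.
move=> u Hu; split.
- move=> [s [Hs Hus]] i j Hi Hij; have Hsz := Hlong s Hs.
  case: Hs => [[Hp Hl] _].
  case: (ltngtP (val i) (val j)) => [Hlt|Hgt|Heq].
  + have Hk := key Hp (ltac:(by rewrite Hl wsum_bot add0n Hsz)) Hus (i := i) (j := j) Hi Hlt.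
    have /triwordP [_ Ht] := Hu.
    have H1 := Ht i j Hlt Hi.
    have H2 : val (u j) <> 2 by move=> E; move: (Hk E); rewrite ffunE.
    have := ltn_ord (u j); move: H1 H2; rewrite /=; lia.
  + move: Hij Hgt; rewrite /=; lia.
  + by have -> : j = i by apply: val_inj.
- move=> H; have [s [Hs Hsz Hus]] := Hex u (conj Hu H).
  exists s; split => //; split => // t /Hub; by rewrite Hsz.
Qed.
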